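(* Let $Y$ be a topological semigroup and $X$ a subsemigroup of $Y$ (with the subspace topology). Suppose there is a continuous homomorphism $h:X\to E$ into a chain-finite semilattice $E$ endowed with the discrete topology such that for every $e\in E$ the set $h^{-1}(e)$ is closed in $Y$. Then $X$ is closed in $Y$.
   Context: A topological semigroup is a topological space with a continuous associative binary operation (no separation axioms assumed here). A semilattice is a commutative semigroup of idempotents. A subset $C$ of a semigroup is a chain if $xy\in\{x,y\}$ for all $x,y\in C$; a semigroup is chain-finite if it has no infinite chain. *)

(* Defs.v *)
From mathcomp Require Import all_boot all_order.
From mathcomp Require Import all_classical all_reals topology.
Set Implicit Arguments. Unset Strict Implicit. Unset Printing Implicit Defensive.
Local Open Scope classical_set_scope.

Definition topological_semigroup (Y : topologicalType) (mul : Y -> Y -> Y) :=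
  associative mul /\ continuous (fun p : Y * Y => mul p.1 p.2).

Definition subsemigroup (Y : Type) (mul : Y -> Y -> Y) (X : set Y) :=
  forall x y, X x -> X y -> X (mul x y).

Definition semilattice (E : Type) (op : E -> E -> E) :=
  [/\ associative op, commutative op & idempotent_op op].

Definition chain (E : Type) (op : E -> E -> E) (C : set E) :=
  forall x y, C x -> C y -> op x y = x \/ op x y = y.

Definition chain_finite (E : Type) (op : E -> E -> E) :=
  forall C : set E, chain op C -> finite_set C.

(* h : X -> E (represented by a function on Y, only its values on X matter)
   is continuous from X with the subspace topology to E with the discrete
   topology: the preimage in X of every subset of E is open in X. *)
Definition continuous_to_discrete (Y : topologicalType) (E : Type)
    (X : set Y) (h : Y -> E) :=
  forall A : set E, exists U : set Y, open U /\ X `&` h @^-1` A = X `&` U.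

Definition hom_on (Y E : Type) (mul : Y -> Y -> Y) (op : E -> E -> E)
    (X : set Y) (h : Y -> E) :=
  forall x y, X x -> X y -> h (mul x y) = op (h x) (h y).

(* Main.v *)
Require Import Defs.
From mathcomp Require Import all_boot all_order.
From mathcomp Require Import all_classical all_reals topology.
Local Open Scope classical_set_scope.

Lemma gen_extremal (E : Type) (op : E -> E -> E) (R : E -> E -> Prop) :
  semilattice op -> chain_finite op ->
  (forall x y z, R x y -> R y z -> R x z) ->
  (forall x y, R x y -> R y x -> x = y) ->
  (forall x y, R x y -> op x y = x \/ op x y = y) ->
  forall S : set E, S !=set0 -> exists m, S m /\ forall s, S s -> R s m -> s = m.
Proof.
move=> [opA opC opI] cf Rt Ra Rc S [s0 Ss0].
apply: contrapT => Hno.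
have Hstep : forall x, exists y, S x -> S y /\ R y x /\ y <> x.
  move=> x; case: (pselect (S x)) => Sx; last by exists x.
  apply: contrapT => Hn; apply: Hno; exists x; split => // s Ss Rsx.
  apply: contrapT => nsx; apply: Hn; exists s => _; split => //; split => //.
have [f Hf] := choice Hstep.
pose u := fun n => iter n f s0.
have Su : forall n, S (u n) by elim=> [|n IH] //=; have [] := Hf _ IH.
have Rs : forall n, R (u n.+1) (u n) /\ u n.+1 <> u n.
  by move=> n; have [_ []] := Hf _ (Su n).
have Rmn : forall m k, R (u (m + k.+1)) (u m).
  move=> m; elim=> [|k IH]; first by rewrite addn1; exact: (Rs m).1.
  by rewrite addnS; apply: Rt IH; exact: (Rs _).1.
have Hlt : forall m n, (m < n)%N -> R (u n) (u m).
  move=> m n /subnKC <-; rewrite addSnnS; exact: Rmn.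
have Hneq : forall m n, (m < n)%N -> u n <> u m.
  move=> m n mn Heq.
  have R1 : R (u m) (u m.+1).
    rewrite -Heq; case: (ltngtP m.+1 n) => [h|h|h]; first exact: Hlt.
    - by move: mn; rewrite ltnNge -ltnS h.
    - by exfalso; apply: (Rs m).2; rewrite h Heq.
  by apply: (Rs m).2; apply: Ra ((Rs m).1) R1.
have chainu : chain op (range u).
  move=> _ _ [m _ <-] [n _ <-].
  case: (ltngtP m n) => h.
  - by case: (Rc _ _ (Hlt _ _ h)) => e; rewrite opC e; [right|left].
  - exact: Rc _ _ (Hlt _ _ h).
  - by rewrite h opI; left.
have := cf _ chainu.
have inj : {in [set: nat] &, injective u}.
  move=> m n _ _ e; case: (ltngtP m n) => // h.
  - by have := Hneq _ _ h; rewrite e.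
  - by have := Hneq _ _ h; rewrite e.
rewrite (eq_finite_set (inj_card_eq inj)) => fin.
exact: infinite_nat fin.
Qed.

Lemma ex_min (E : Type) (op : E -> E -> E) :
  semilattice op -> chain_finite op ->
  forall S : set E, S !=set0 -> exists m, S m /\ forall s, S s -> op s m = s -> s = m.
Proof.
move=> sl cf; have [opA opC opI] := sl; apply: (@gen_extremal E op (fun s m => op s m = s) sl cf).
- by move=> x y z hxy hyz; rewrite -hxy -opA hyz.
- by move=> x y hxy hyx; rewrite -hxy opC hyx.
- by move=> x y ->; left.
Qed.

Lemma ex_max (E : Type) (op : E -> E -> E) :
  semilattice op -> chain_finite op ->
  forall S : set E, S !=set0 -> exists m, S m /\ forall s, S s -> op m s = m -> s = m.
Proof.
move=> sl cf; have [opA opC opI] := sl.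
apply: (@gen_extremal E op (fun s m => op m s = m) sl cf).
- by move=> x y z hxy hyz; rewrite -hyz -opA hxy.
- by move=> x y hxy hyx; rewrite -hyx opC hxy.
- by move=> x y h; right; rewrite opC.
Qed.

Inductive prods (E : Type) (op : E -> E -> E) (A : set E) : E -> Prop :=
| pbase a : A a -> prods E op A a
| pmul x y : prods E op A x -> prods E op A y -> prods E op A (op x y).
Arguments prods {E} op A _.
Arguments pbase {E} op {A a}.
Arguments pmul {E op A x y}.

Lemma ex_inf (E : Type) (op : E -> E -> E) :
  semilattice op -> chain_finite op ->
  forall A : set E, A !=set0 -> exists m,
    (forall a, A a -> op m a = m) /\
    (forall l, (forall a, A a -> op l a = l) -> op l m = l).
Proof.
move=> sl cf A [a0 Aa0]; have [opA opC opI] := sl.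
have [m [Pm Hm]] := @ex_min E op sl cf (prods op A) (ex_intro _ a0 (pbase op Aa0)).
exists m; split.
- move=> a Aa; apply: Hm; first exact: pmul Pm (pbase op Aa).
  by rewrite opC opA opI.
- move=> l Hl; elim: Pm {Hm} => [a Aa|x y _ Hx _ Hy]; first exact: Hl.
  by rewrite opA Hx.
Qed.

Lemma cvg_mulS (Y : topologicalType) (mul : Y -> Y -> Y) :
  continuous (fun p : Y * Y => mul p.1 p.2) ->
  forall (T : Type) (F : set_system T) {FF : Filter F},
  forall (f g : T -> Y) (a b : Y), f @ F --> a -> g @ F --> b ->
  (fun t => mul (f t) (g t)) @ F --> mul a b.
Proof.
move=> Hc T F FF f g a b fa gb.
apply: (cvg_comp2 fa gb); exact: (Hc (a, b)).
Qed.

Lemma prod_nested (U : Type) (F G : set_system U) {FF : Filter F} {FG : Filter G}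
  (P : U -> U -> Prop) :
  filter_prod F G (fun p => P p.1 p.2) -> \forall x \near F, \forall y \near G, P x y.
Proof.
move=> [[A B] /= [FA GB] sub].
apply: filterS FA => x Ax; apply: filterS GB => y By.
exact: (sub (x, y)).
Qed.

Lemma cvg_prod_nested (Y : topologicalType) (f : Y * Y -> Y) (z : Y) :
  f @ filter_prod (nbhs z) (nbhs z) --> f (z, z) ->
  forall N, nbhs (f (z, z)) N -> \forall x \near z, \forall y \near z, N (f (x, y)).
Proof.
move=> Hf N HN.
have H1 := Hf N HN.
apply: (@prod_nested _ (nbhs z) (nbhs z) _ _ (fun x y => N (f (x, y)))).
move: H1.
case=> [[A B] /= [FA GB] sub].
exists (A, B) => //= -[x y] /= [Ax By].
exact: (sub (x,y)).
Qed.

Lemma open_pt (Y : topologicalType) (E : Type) (X : set Y) (h : Y -> E) w :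
  continuous_to_discrete X h -> X w -> \forall y \near w, X y -> h y = h w.
Proof.
move=> hcd Xw; have [U [oU eU]] := hcd [set h w].
have Uw : U w.
  have : (X `&` U) w by rewrite -eU; split.
  by case.
have nU : nbhs w U by apply: open_nbhs_nbhs; split.
apply: filterS nU => y Uy Xy.
have : (X `&` h @^-1` [set h w]) y by rewrite eU; split.
by case.
Qed.

Lemma closed_pt (Y : topologicalType) (E : Type) (X : set Y) (h : Y -> E) g w :
  closed (X `&` h @^-1` [set g]) ->
  (forall N, nbhs w N -> exists x, [/\ X x, h x = g & N x]) -> X w /\ h w = g.
Proof.
move=> cl H.
have : closure (X `&` h @^-1` [set g]) w.
  by move=> B nB; have [x [Xx hx Bx]] := H B nB; exists x.
by move/cl => [].
Qed.

Lemma pick_cl (Y : topologicalType) (X : set Y) z (P : Y -> Prop) :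
  closure X z -> (\forall x \near z, P x) -> exists x, X x /\ P x.
Proof. by move=> cz nP; have [x [Xx Px]] := cz _ nP; exists x. Qed.

Lemma near_app (Y : topologicalType) (f : Y -> Y) (z w : Y) :
  f @ z --> w -> forall P : Y -> Prop, (\forall y \near w, P y) -> \forall x \near z, P (f x).
Proof. by move=> fc P /fc. Qed.
Arguments near_app {Y f z w} _ {P}.

Theorem lemma4p1 (Y : topologicalType) (mul : Y -> Y -> Y) (X : set Y)
  (E : Type) (op : E -> E -> E) (h : Y -> E) :
  topological_semigroup mul ->
  subsemigroup mul X ->
  semilattice op ->
  chain_finite op ->
  hom_on mul op X h ->
  continuous_to_discrete X h ->
  (forall e : E, closed (X `&` h @^-1` [set e])) ->
  closed X.
Proof.
move=> [mulA mulC] Xsub sl cf hom hcd hcl.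
have [opA opC opI] := sl.
move=> z cz; apply: contrapT => nXz.
have cmul := @cvg_mulS Y mul mulC.
have infW : forall W, nbhs z W -> exists m,
    (forall x, X x -> W x -> op m (h x) = m) /\
    (forall l, (forall x, X x -> W x -> op l (h x) = l) -> op l m = l).
  move=> W nW.
  have [x [Xx Wx]] := @pick_cl Y X z W cz nW.
  have [m [H1 H2]] := @ex_inf E op sl cf (h @` (X `&` W)) (ex_intro _ (h x) (ex_intro2 _ _ x (conj Xx Wx) erefl)).
  exists m; split.
  - by move=> y Xy Wy; apply: H1; exists y.
  - by move=> l Hl; apply: H2 => _ [y [Xy Wy] <-]; exact: Hl.
pose M := [set m | exists V, [/\ nbhs z V,
   (forall x, X x -> V x -> op m (h x) = m) &
   (forall l, (forall x, X x -> V x -> op l (h x) = l) -> op l m = l)]].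
have Mne : M !=set0.
  have [m [H1 H2]] := infW _ (@filterT _ (nbhs z) _).
  by exists m; exists setT; split => //; exact: filterT.
have [e [[V0 [nV0 ei eii0]] emax]] := @ex_max E op sl cf M Mne.
have eii : forall W, nbhs z W -> forall l,
    (forall x, X x -> W x -> op l (h x) = l) -> op l e = l.
  move=> W nW l Hl.
  have nWV : nbhs z (W `&` V0) by apply: filterI.
  have [m' [m1 m2]] := infW _ nWV.
  have Mm' : M m' by exists (W `&` V0).
  have em' : op e m' = e by apply: m2 => x Xx [_ V0x]; exact: ei.
  rewrite -(emax _ Mm' em').
  by apply: m2 => x Xx [Wx _]; exact: Hl.
have FL : forall (L : Y -> Y) (ell : E -> E),
    continuous L -> (forall x, X x -> X (L x)) ->
    (forall x, X x -> h (L x) = ell (h x)) ->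
    (forall u v, ell (op u v) = op (ell u) v) ->
    ~ X (L z) ->
    (forall V, nbhs z V -> exists b, [/\ X b, V b & X (L (mul b z))]) -> False.
  move=> L ell Lc LX hL ellM nXLz HH.
  have cL : forall (T : Type) (F : set_system T), Filter F -> forall (f : T -> Y) (a : Y),
      f @ F --> a -> (fun t => L (f t)) @ F --> L a.
    by move=> T F FF f a fa; apply: cvg_comp fa (Lc a).
  have hLbx : forall b x, X b -> X x -> h (L (mul b x)) = ell (op (h b) (h x)).
    by move=> b x Xb Xx; rewrite hL ?hom //; exact: Xsub.
  have XLbx : forall b x, X b -> X x -> X (L (mul b x)).
    by move=> b x Xb Xx; apply: LX; exact: Xsub.
  have cb : forall b x : Y, (fun t : Y => b) @ nbhs x --> b.
    by move=> b x; apply: cvg_cst.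
  have step1 : forall b, X b -> V0 b -> X (L (mul b z)) ->
      \forall x \near z, X x -> h (L (mul b x)) = ell e.
    move=> b Xb V0b Xw.
    pose g := h (L (mul b z)).
    have cf1 : (fun x => L (mul b x)) @ z --> L (mul b z).
      exact: (cL _ _ _ _ _ (cmul _ _ _ (fun=> b) id b z (cb _ _) cvg_id)).
    have c1 : \forall x \near z, X x -> ell (op (h b) (h x)) = g.
      have := near_app cf1 (@open_pt Y E X h _ hcd Xw); apply: filterS => x Hx Xx.
      by rewrite -hLbx //; apply: Hx; exact: XLbx.
    have cf2 : (fun x => L (mul b (mul x x))) @ z --> L (mul b (mul z z)).
      exact: (cL _ _ _ _ _ (cmul _ _ _ (fun=> b) (fun x => mul x x) b (mul z z) (cb _ _)
                (cmul _ _ _ id id z z cvg_id cvg_id))).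
    have [Xw' hw'] : X (L (mul b (mul z z))) /\ h (L (mul b (mul z z))) = g.
      apply: (@closed_pt Y E X h _ _ (hcl g)) => N nN.
      have nN' := near_app cf2 nN.
      have [x [Xx [Nx Hx]]] := @pick_cl Y X z _ cz (filterI nN' c1).
      exists (L (mul b (mul x x))); split => //.
      - by apply: XLbx => //; exact: Xsub.
      - by rewrite hLbx //; [rewrite hom // opI; exact: Hx | exact: Xsub].
    have cf3 : (fun p : Y * Y => L (mul b (mul p.1 p.2))) @ filter_prod (nbhs z) (nbhs z)
        --> L (mul b (mul z z)).
      exact: (cL _ _ _ _ _ (cmul _ _ _ (fun=> b) (fun p => mul p.1 p.2) b (mul z z) (cvg_cst _)
                (cmul _ _ _ fst snd z z cvg_fst cvg_snd))).
    have n3 := @cvg_prod_nested Y (fun p => L (mul b (mul p.1 p.2))) z cf3 _ (@open_pt Y E X h _ hcd Xw').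
    have [x [Xx [Hx1 Hx2]]] := @pick_cl Y X z _ cz (filterI c1 n3).
    have gle : op g e = g.
      apply: (eii _ Hx2) => x' Xx' Hx'.
      have := Hx' (XLbx _ _ Xb (Xsub _ _ Xx Xx')).
      rewrite hw' hLbx //; last exact: Xsub.
      by rewrite hom // opA ellM (Hx1 Xx).
    have ge : g = ell e.
      have [x0 [Xx0 [Hx0 V0x0]]] := @pick_cl Y X z _ cz (filterI c1 nV0).
      have E1 : op (op (h b) (h x0)) e = e.
        by rewrite -opA (opC (h x0)) (ei _ Xx0 V0x0) opC (ei _ Xb V0b).
      by rewrite -E1 ellM (Hx0 Xx0) gle.
    by apply: filterS c1 => y Hy Xy; rewrite hLbx // Hy // ge.
  have cf4 : (fun p : Y * Y => L (mul p.1 p.2)) @ filter_prod (nbhs z) (nbhs z) --> L (mul z z).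
    exact: (cL _ _ _ _ _ (cmul _ _ _ fst snd z z cvg_fst cvg_snd)).
  have [Xw2 hw2] : X (L (mul z z)) /\ h (L (mul z z)) = ell e.
    apply: (@closed_pt Y E X h _ _ (hcl _)) => N nN.
    have n4 := @cvg_prod_nested Y (fun p => L (mul p.1 p.2)) z cf4 N nN.
    have [b [Xb [n4b V0b] XLb]] := HH _ (filterI n4 nV0).
    have [x [Xx [Nx Hx]]] := @pick_cl Y X z _ cz (filterI n4b (step1 b Xb V0b XLb)).
    by exists (L (mul b x)); split => //; [exact: XLbx | exact: Hx].
  have cf5 : (fun x => L (mul x x)) @ z --> L (mul z z).
    exact: (cL _ _ _ _ _ (cmul _ _ _ id id z z cvg_id cvg_id)).
  have n5 : \forall x \near z, X x -> h (L x) = ell e.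
    have := near_app cf5 (@open_pt Y E X h _ hcd Xw2); apply: filterS => x Hx Xx.
    by have := Hx (XLbx _ _ Xx Xx); rewrite hLbx // opI hw2 -hL.
  apply: nXLz.
  suff [] : X (L z) /\ h (L z) = ell e by [].
  apply: (@closed_pt Y E X h _ _ (hcl _)) => N nN.
  have [x [Xx [Nx Hx]]] := @pick_cl Y X z _ cz (filterI (near_app (Lc z) nN) n5).
  by exists (L x); split => //; [exact: LX | exact: Hx].
case: (pselect (exists a, X a /\ ~ X (mul a z))) => [[a0 [Xa0 nXa0]]|noH].
- pose H := [set c | exists a, [/\ X a, ~ X (mul a z) & h a = c]].
  have Hne : H !=set0 by exists (h a0); exists a0.
  have [c [[a [Xa nXa hac]] cmin]] := @ex_min E op sl cf H Hne.
  have cfa : forall x, (fun t => mul a t) @ x --> mul a x.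
    by move=> x; exact: (cmul _ _ _ (fun=> a) id a x (cvg_cst _) cvg_id).
  apply: (FL (mul a) (op c)) => //. all: try (by move=> x Xx; exact: Xsub). all: try (by move=> x Xx; rewrite hom // hac).
  + move=> V nV; apply: contrapT => nob.
    apply: nXa.
    suff [] : X (mul a z) /\ h (mul a z) = c by [].
    apply: (@closed_pt Y E X h _ _ (hcl c)) => N nN.
    have [x [Xx [Nx Vx]]] := @pick_cl Y X z _ cz (filterI (near_app (cfa z) nN) nV).
    exists (mul a x); split => //; first exact: Xsub.
    have Hs : H (h (mul a x)).
      exists (mul a x); split => //; first exact: Xsub.
      by rewrite -mulA => Xax; apply: nob; exists x; split.
    apply: cmin Hs _.
    by rewrite hom // hac opC opA opI.
- apply: (FL id id) => //.
  + by move=> x; exact: cvg_id.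
  + move=> V nV; have [b [Xb Vb]] := @pick_cl Y X z V cz nV.
    exists b; split => //; apply: contrapT => nb; apply: noH; by exists b.
Qed.
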